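(* Let $\mathbb{C}$ be a regular Mal'tsev category. Then $\mathbb{C}$ is congruence distributive if and only if $\mathbb{C}$ is a majority category.
   Context: A category is regular if it has finite limits and coequalizers of kernel pairs and regular epimorphisms are pullback-stable. A finitely complete category is Mal'tsev if every reflexive relation (subobject of $X\times X$ containing the diagonal) is an equivalence relation. In a regular Mal'tsev category, for equivalence relations $\alpha,\beta$ on $X$ the join in the poset of equivalence relations on $X$ exists and equals the relational composite $\alpha\circ\beta$, where the composite of relations represented by $(r_1,r_2):R_0\to X\times X$ and $(s_1,s_2):S_0\to X\times X$ is the image (regular epi–mono factorization) of $(r_1p_1,s_2p_2):P\to X\times X$, $(P,p_1,p_2)$ the pullback of $s_1$ along $r_2$. $\mathbb{C}$ is congruence distributive if for every object $X$ the lattice of equivalence relations on $X$ is distributive. For $w:S\to W$ and subobject $A$ of $W$, $w\in_S A$ means $w$ factors through a representative of $A$. A ternary relation $R\leqslant X\times Y\times Z$ is majority-selecting if for all $S$ and $x,x':S\to X$, $y,y':S\to Y$, $z,z':S\to Z$: $(x,y,z')\in_S R$, $(x,y',z)\in_S R$, $(x',y,z)\in_S R$ imply $(x,y,z)\in_S R$; a majority category is one in which every ternary relation is majority-selecting. *)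

(* Defs.v *)
Set Implicit Arguments.
Unset Strict Implicit.

Record Category := {
  Ob :> Type;
  Hom : Ob -> Ob -> Type;
  idm : forall A, Hom A A;
  comp : forall A B C, Hom B C -> Hom A B -> Hom A C;
  comp_id_l : forall A B (f : Hom A B), comp (idm B) f = f;
  comp_id_r : forall A B (f : Hom A B), comp f (idm A) = f;
  comp_assoc : forall A B C D (h : Hom C D) (g : Hom B C) (f : Hom A B),
      comp h (comp g f) = comp (comp h g) f
}.
Arguments Hom {c} _ _.
Arguments idm {c} _.
Arguments comp {c A B C} _ _.
Declare Scope cat_scope.
Notation "g \o f" := (comp g f) (at level 40, left associativity) : cat_scope.
Open Scope cat_scope.

Section Defs.
Variable C : Category.

Definition is_terminal (T : C) : Prop :=
  forall A : C, exists t : Hom A T, forall t' : Hom A T, t' = t.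

Definition is_product (X Y P : C) (p1 : Hom P X) (p2 : Hom P Y) : Prop :=
  forall (S : C) (f : Hom S X) (g : Hom S Y),
    exists h : Hom S P, p1 \o h = f /\ p2 \o h = g /\
      forall h' : Hom S P, p1 \o h' = f -> p2 \o h' = g -> h' = h.

Definition is_equalizer (X Y E : C) (f g : Hom X Y) (e : Hom E X) : Prop :=
  f \o e = g \o e /\
  forall (S : C) (k : Hom S X), f \o k = g \o k ->
    exists h : Hom S E, e \o h = k /\ forall h' : Hom S E, e \o h' = k -> h' = h.

Definition is_pullback (A B Z P : C) (f : Hom A Z) (g : Hom B Z)
    (p1 : Hom P A) (p2 : Hom P B) : Prop :=
  f \o p1 = g \o p2 /\
  forall (S : C) (a : Hom S A) (b : Hom S B), f \o a = g \o b ->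
    exists h : Hom S P, p1 \o h = a /\ p2 \o h = b /\
      forall h' : Hom S P, p1 \o h' = a -> p2 \o h' = b -> h' = h.

Definition has_finite_limits : Prop :=
  (exists T : C, is_terminal T) /\
  (forall X Y : C, exists P (p1 : Hom P X) (p2 : Hom P Y), is_product p1 p2) /\
  (forall (X Y : C) (f g : Hom X Y), exists E (e : Hom E X), is_equalizer f g e).

Definition is_coequalizer (X Y Q : C) (f g : Hom X Y) (q : Hom Y Q) : Prop :=
  q \o f = q \o g /\
  forall (S : C) (k : Hom Y S), k \o f = k \o g ->
    exists h : Hom Q S, h \o q = k /\ forall h' : Hom Q S, h' \o q = k -> h' = h.

Definition regular_epi (Y Q : C) (q : Hom Y Q) : Prop :=
  exists (X : C) (f g : Hom X Y), is_coequalizer f g q.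

Definition is_regular : Prop :=
  has_finite_limits /\
  (forall (A B : C) (f : Hom A B) (K : C) (k1 k2 : Hom K A),
      is_pullback f f k1 k2 -> exists Q (q : Hom A Q), is_coequalizer k1 k2 q) /\
  (forall (A B Z P : C) (q : Hom A Z) (g : Hom B Z) (p1 : Hom P A) (p2 : Hom P B),
      regular_epi q -> is_pullback q g p1 p2 -> regular_epi p2).

(** A relation R <= X x Y (resp. X x Y x Z) is represented by a
    jointly monic span (= a mono into the product, up to the canonical
    correspondence), and subobjects are handled through representatives. *)
Definition jointly_monic2 (R X Y : C) (r1 : Hom R X) (r2 : Hom R Y) : Prop :=
  forall (S : C) (h k : Hom S R), r1 \o h = r1 \o k -> r2 \o h = r2 \o k -> h = k.

Definition jointly_monic3 (R X Y Z : C) (r1 : Hom R X) (r2 : Hom R Y)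
    (r3 : Hom R Z) : Prop :=
  forall (S : C) (h k : Hom S R),
    r1 \o h = r1 \o k -> r2 \o h = r2 \o k -> r3 \o h = r3 \o k -> h = k.

(** generalized membership  (x,y) \in_S R  : factoring through R *)
Definition mem2 (R X Y S : C) (r1 : Hom R X) (r2 : Hom R Y)
    (x : Hom S X) (y : Hom S Y) : Prop :=
  exists h : Hom S R, r1 \o h = x /\ r2 \o h = y.

Definition mem3 (R X Y Z S : C) (r1 : Hom R X) (r2 : Hom R Y) (r3 : Hom R Z)
    (x : Hom S X) (y : Hom S Y) (z : Hom S Z) : Prop :=
  exists h : Hom S R, r1 \o h = x /\ r2 \o h = y /\ r3 \o h = z.

Definition relation_on (X R : C) (r1 r2 : Hom R X) : Prop := jointly_monic2 r1 r2.

Definition reflexive_rel (X R : C) (r1 r2 : Hom R X) : Prop :=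
  exists d : Hom X R, r1 \o d = idm X /\ r2 \o d = idm X.

Definition symmetric_rel (X R : C) (r1 r2 : Hom R X) : Prop :=
  forall (S : C) (x y : Hom S X), mem2 r1 r2 x y -> mem2 r1 r2 y x.

Definition transitive_rel (X R : C) (r1 r2 : Hom R X) : Prop :=
  forall (S : C) (x y z : Hom S X),
    mem2 r1 r2 x y -> mem2 r1 r2 y z -> mem2 r1 r2 x z.

Definition equivalence_rel (X R : C) (r1 r2 : Hom R X) : Prop :=
  relation_on r1 r2 /\ reflexive_rel r1 r2 /\ symmetric_rel r1 r2 /\
  transitive_rel r1 r2.

Definition rel_le (X R R' : C) (r1 r2 : Hom R X) (r1' r2' : Hom R' X) : Prop :=
  exists h : Hom R R', r1' \o h = r1 /\ r2' \o h = r2.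

Definition is_maltsev : Prop :=
  has_finite_limits /\
  forall (X R : C) (r1 r2 : Hom R X),
    relation_on r1 r2 -> reflexive_rel r1 r2 -> equivalence_rel r1 r2.

Definition is_eq_meet (X A B M : C) (a1 a2 : Hom A X) (b1 b2 : Hom B X)
    (m1 m2 : Hom M X) : Prop :=
  equivalence_rel m1 m2 /\ rel_le m1 m2 a1 a2 /\ rel_le m1 m2 b1 b2 /\
  forall (T : C) (t1 t2 : Hom T X), equivalence_rel t1 t2 ->
    rel_le t1 t2 a1 a2 -> rel_le t1 t2 b1 b2 -> rel_le t1 t2 m1 m2.

Definition is_eq_join (X A B J : C) (a1 a2 : Hom A X) (b1 b2 : Hom B X)
    (j1 j2 : Hom J X) : Prop :=
  equivalence_rel j1 j2 /\ rel_le a1 a2 j1 j2 /\ rel_le b1 b2 j1 j2 /\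
  forall (T : C) (t1 t2 : Hom T X), equivalence_rel t1 t2 ->
    rel_le a1 a2 t1 t2 -> rel_le b1 b2 t1 t2 -> rel_le j1 j2 t1 t2.

(** Congruence distributive: for every X, Eq(X) is a lattice (binary meets
    and joins exist) and it is distributive:
      a /\ (b \/ c) = (a /\ b) \/ (a /\ c). *)
Definition congruence_distributive : Prop :=
  forall X : C,
    (forall (A B : C) (a1 a2 : Hom A X) (b1 b2 : Hom B X),
        equivalence_rel a1 a2 -> equivalence_rel b1 b2 ->
        (exists M (m1 m2 : Hom M X), is_eq_meet a1 a2 b1 b2 m1 m2) /\
        (exists J (j1 j2 : Hom J X), is_eq_join a1 a2 b1 b2 j1 j2)) /\
    (forall (A B D : C) (a1 a2 : Hom A X) (b1 b2 : Hom B X) (c1 c2 : Hom D X)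
            (BC : C) (bc1 bc2 : Hom BC X)
            (L : C) (l1 l2 : Hom L X)
            (AB : C) (ab1 ab2 : Hom AB X)
            (AC : C) (ac1 ac2 : Hom AC X)
            (Rr : C) (rr1 rr2 : Hom Rr X),
        equivalence_rel a1 a2 -> equivalence_rel b1 b2 -> equivalence_rel c1 c2 ->
        is_eq_join b1 b2 c1 c2 bc1 bc2 ->
        is_eq_meet a1 a2 bc1 bc2 l1 l2 ->
        is_eq_meet a1 a2 b1 b2 ab1 ab2 ->
        is_eq_meet a1 a2 c1 c2 ac1 ac2 ->
        is_eq_join ab1 ab2 ac1 ac2 rr1 rr2 ->
        rel_le l1 l2 rr1 rr2 /\ rel_le rr1 rr2 l1 l2).

Definition majority_selecting (R X Y Z : C) (r1 : Hom R X) (r2 : Hom R Y)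
    (r3 : Hom R Z) : Prop :=
  forall (S : C) (x x' : Hom S X) (y y' : Hom S Y) (z z' : Hom S Z),
    mem3 r1 r2 r3 x y z' -> mem3 r1 r2 r3 x y' z -> mem3 r1 r2 r3 x' y z ->
    mem3 r1 r2 r3 x y z.

Definition is_majority : Prop :=
  forall (R X Y Z : C) (r1 : Hom R X) (r2 : Hom R Y) (r3 : Hom R Z),
    jointly_monic3 r1 r2 r3 -> majority_selecting r1 r2 r3.

End Defs.

(* Main.v *)
Require Import Defs.
Set Implicit Arguments.
Unset Strict Implicit.

Lemma ca (C : Category) (A B D E : C) (h : Hom D E) (g : Hom B D) (f : Hom A B) :
  h \o (g \o f) = (h \o g) \o f.
Proof. apply comp_assoc. Qed.

Lemma cext (C : Category) (A B D E : C) (g : Hom B D) (f : Hom A B) (h : Hom A D)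
  (H : g \o f = h) (k : Hom E A) : g \o (f \o k) = h \o k.
Proof. rewrite ca, H; reflexivity. Qed.

Lemma regepi_epi (C : Category) (Y Q : C) (q : Hom Y Q) :
  regular_epi q -> forall (S : C) (u v : Hom Q S), u \o q = v \o q -> u = v.
Proof.
  intros [X [f [g [Hc Hu]]]] S u v E.
  destruct (Hu S (u \o q)) as [h [Hh Hun]].
  { rewrite <- !ca, Hc; reflexivity. }
  rewrite (Hun u eq_refl), (Hun v (eq_sym E)); reflexivity.
Qed.

Lemma prod_ext (C : Category) (X Y P : C) (p1 : Hom P X) (p2 : Hom P Y) :
  is_product p1 p2 -> forall S (u v : Hom S P), p1 \o u = p1 \o v -> p2 \o u = p2 \o v -> u = v.
Proof.
  intros Hp S u v E1 E2.
  destruct (Hp S (p1 \o u) (p2 \o u)) as [h [_ [_ Hun]]].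
  rewrite (Hun u eq_refl eq_refl), (Hun v (eq_sym E1) (eq_sym E2)); reflexivity.
Qed.

Lemma pb_ext (C : Category) (A B Z P : C) (f : Hom A Z) (g : Hom B Z)
  (p1 : Hom P A) (p2 : Hom P B) :
  is_pullback f g p1 p2 -> forall S (u v : Hom S P), p1 \o u = p1 \o v -> p2 \o u = p2 \o v -> u = v.
Proof.
  intros [Hc Hp] S u v E1 E2.
  destruct (Hp S (p1 \o u) (p2 \o u)) as [h [_ [_ Hun]]].
  { rewrite !ca, Hc; reflexivity. }
  rewrite (Hun u eq_refl eq_refl), (Hun v (eq_sym E1) (eq_sym E2)); reflexivity.
Qed.

Lemma pb_exists (C : Category) : has_finite_limits C ->
  forall (A B Z : C) (f : Hom A Z) (g : Hom B Z),
  exists P (p1 : Hom P A) (p2 : Hom P B), is_pullback f g p1 p2.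
Proof.
  intros [_ [Hprod Heq]] A B Z f g.
  destruct (Hprod A B) as [P [p1 [p2 Hp]]].
  destruct (Heq P Z (f \o p1) (g \o p2)) as [E [e [He1 He2]]].
  exists E, (p1 \o e), (p2 \o e). split.
  - rewrite !ca; exact He1.
  - intros S a b Hab.
    destruct (Hp S a b) as [h [Ha [Hb Hun]]].
    destruct (He2 S h) as [k [Hk Hkun]].
    { rewrite <- !ca, Ha, Hb; exact Hab. }
    exists k. split; [rewrite <- ca, Hk; exact Ha|split; [rewrite <- ca, Hk; exact Hb|]].
    intros k' E1 E2. apply Hkun.
    apply (prod_ext Hp); rewrite ?ca; [rewrite E1, Ha | rewrite E2, Hb]; reflexivity.
Qed.

Lemma cover (C : Category) : is_regular C ->
  forall (A I S : C) (q : Hom A I) (h : Hom S I), regular_epi q ->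
  exists S' (e : Hom S' S) (w : Hom S' A), regular_epi e /\ q \o w = h \o e.
Proof.
  intros [Hfl [_ Hst]] A I S q h Hq.
  destruct (pb_exists Hfl q h) as [P [p1 [p2 Hpb]]].
  exists P, p2, p1. split; [exact (Hst _ _ _ _ _ _ _ _ Hq Hpb) | exact (proj1 Hpb)].
Qed.

Lemma image_fact (C : Category) : is_regular C ->
  forall (A B : C) (f : Hom A B), exists I (q : Hom A I) (i : Hom I B),
    regular_epi q /\ i \o q = f /\
    (forall S (u v : Hom S I), i \o u = i \o v -> u = v).
Proof.
  intros HR A B f. pose proof HR as [Hfl [Hco Hst]].
  destruct (pb_exists Hfl f f) as [K [k1 [k2 Hk]]].
  destruct (Hco _ _ _ _ _ _ Hk) as [I [q Hq]].
  assert (Hqr : regular_epi q) by (exists K, k1, k2; exact Hq).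
  destruct Hq as [Hq1 Hq2].
  destruct (Hq2 B f (proj1 Hk)) as [i [Hi _]].
  exists I, q, i. split; [exact Hqr|split; [exact Hi|]].
  intros S u v Huv.
  destruct (cover HR u Hqr) as [S1 [e1 [w1 [He1 Hw1]]]].
  destruct (cover HR (v \o e1) Hqr) as [S2 [e2 [w2 [He2 Hw2]]]].
  assert (Hf : f \o (w1 \o e2) = f \o w2).
  { rewrite <- Hi, <- !ca, Hw2, (ca q w1 e2), Hw1, !ca, Huv; reflexivity. }
  destruct (proj2 Hk _ _ _ Hf) as [h [Hh1 [Hh2 _]]].
  assert (E : q \o (w1 \o e2) = q \o w2).
  { rewrite <- Hh1, <- Hh2, !ca, Hq1; reflexivity. }
  rewrite ca, Hw1, Hw2, <- !ca in E.
  apply (regepi_epi He1). apply (regepi_epi He2). rewrite <- !ca. exact E.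
Qed.

Lemma descent2 (C : Category) (R X Y S S' : C) (r1 : Hom R X) (r2 : Hom R Y)
  (x : Hom S X) (y : Hom S Y) (e : Hom S' S) (t : Hom S' R) :
  jointly_monic2 r1 r2 -> regular_epi e -> r1 \o t = x \o e -> r2 \o t = y \o e ->
  mem2 r1 r2 x y.
Proof.
  intros Hjm He E1 E2. pose proof He as [T [f [g [Hc Hu]]]].
  destruct (Hu R t) as [k [Hk _]].
  { apply Hjm; rewrite !ca; [rewrite E1|rewrite E2]; rewrite <- !ca, Hc; reflexivity. }
  exists k. split; apply (regepi_epi He); rewrite <- ca, Hk; assumption.
Qed.

Lemma descent3 (C : Category) (R X Y Z S S' : C) (r1 : Hom R X) (r2 : Hom R Y) (r3 : Hom R Z)
  (x : Hom S X) (y : Hom S Y) (z : Hom S Z) (e : Hom S' S) (t : Hom S' R) :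
  jointly_monic3 r1 r2 r3 -> regular_epi e -> r1 \o t = x \o e -> r2 \o t = y \o e ->
  r3 \o t = z \o e -> mem3 r1 r2 r3 x y z.
Proof.
  intros Hjm He E1 E2 E3. pose proof He as [T [f [g [Hc Hu]]]].
  destruct (Hu R t) as [k [Hk _]].
  { apply Hjm; rewrite !ca; [rewrite E1|rewrite E2|rewrite E3]; rewrite <- !ca, Hc; reflexivity. }
  exists k. split; [|split]; apply (regepi_epi He); rewrite <- ca, Hk; assumption.
Qed.

Lemma mem2_comp (C : Category) (R X S S' : C) (r1 r2 : Hom R X) (x y : Hom S X) (e : Hom S' S) :
  mem2 r1 r2 x y -> mem2 r1 r2 (x \o e) (y \o e).
Proof. intros [h [H1 H2]]. exists (h \o e). rewrite !ca, H1, H2; split; reflexivity. Qed.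

Lemma mem2_le (C : Category) (R R' X S : C) (r1 r2 : Hom R X) (s1 s2 : Hom R' X) (x y : Hom S X) :
  rel_le r1 r2 s1 s2 -> mem2 r1 r2 x y -> mem2 s1 s2 x y.
Proof. intros [g [G1 G2]] [h [H1 H2]]. exists (g \o h). rewrite !ca, G1, G2; split; assumption. Qed.

Lemma le_trans (C : Category) (R R' R'' X : C) (r1 r2 : Hom R X) (s1 s2 : Hom R' X) (t1 t2 : Hom R'' X) :
  rel_le r1 r2 s1 s2 -> rel_le s1 s2 t1 t2 -> rel_le r1 r2 t1 t2.
Proof. intros H1 H2. exact (mem2_le H2 H1). Qed.

Lemma mem2_gen (C : Category) (R X : C) (r1 r2 : Hom R X) : mem2 r1 r2 r1 r2.
Proof. exists (idm R). rewrite !comp_id_r; split; reflexivity. Qed.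

Lemma refl_mem (C : Category) (R X S : C) (r1 r2 : Hom R X) (x : Hom S X) :
  reflexive_rel r1 r2 -> mem2 r1 r2 x x.
Proof. intros [d [D1 D2]]. exists (d \o x). rewrite !ca, D1, D2, comp_id_l; split; reflexivity. Qed.

Lemma equiv_of_mem (C : Category) (X A B M : C) (a1 a2 : Hom A X) (b1 b2 : Hom B X)
  (m1 m2 : Hom M X) :
  equivalence_rel a1 a2 -> equivalence_rel b1 b2 -> jointly_monic2 m1 m2 ->
  (forall S (x y : Hom S X), mem2 m1 m2 x y <-> (mem2 a1 a2 x y /\ mem2 b1 b2 x y)) ->
  equivalence_rel m1 m2.
Proof.
  intros [_ [Ra [Sa Ta]]] [_ [Rb [Sb Tb]]] Hjm Hm.
  split; [exact Hjm|split; [|split]].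
  - apply Hm; split; [exact Ra|exact Rb].
  - intros S x y H; apply Hm in H; destruct H; apply Hm; split; auto.
  - intros S x y z H1 H2; apply Hm in H1; apply Hm in H2; destruct H1, H2; apply Hm;
      split; eauto.
Qed.

Lemma meet_exists (C : Category) : has_finite_limits C ->
  forall (X A B : C) (a1 a2 : Hom A X) (b1 b2 : Hom B X),
  equivalence_rel a1 a2 -> equivalence_rel b1 b2 ->
  exists M (m1 m2 : Hom M X), is_eq_meet a1 a2 b1 b2 m1 m2 /\
    (forall S (x y : Hom S X), mem2 a1 a2 x y -> mem2 b1 b2 x y -> mem2 m1 m2 x y).
Proof.
  intros HF X A B a1 a2 b1 b2 Ea Eb.
  pose proof HF as [_ [Hprod _]].
  destruct (Hprod X X) as [P [p1 [p2 Hp]]].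
  destruct (Hp A a1 a2) as [ha [Ha1 [Ha2 _]]].
  destruct (Hp B b1 b2) as [hb [Hb1 [Hb2 _]]].
  destruct (pb_exists HF ha hb) as [M [pa [pb Hpb]]].
  pose proof (proj1 Hpb) as Hc.
  assert (Hiff : forall S (x y : Hom S X), mem2 (a1 \o pa) (a2 \o pa) x y <->
                 (mem2 a1 a2 x y /\ mem2 b1 b2 x y)).
  { intros S x y; split.
    - intros [h [H1 H2]]. split.
      + exists (pa \o h); rewrite !ca; split; assumption.
      + exists (pb \o h). rewrite <- Hb1, <- Hb2, <- !ca, (ca hb pb h), <- Hc, <- !ca.
        rewrite (ca p1 ha), (ca p2 ha), Ha1, Ha2, !ca. split; assumption.
    - intros [[ga [G1 G2]] [gb [K1 K2]]].
      destruct (proj2 Hpb S ga gb) as [h [E1 [E2 _]]].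
      { apply (prod_ext Hp); rewrite !ca; rewrite ?Ha1, ?Ha2, ?Hb1, ?Hb2; congruence. }
      exists h. rewrite <- !ca, E1. split; assumption. }
  assert (Hjm : jointly_monic2 (a1 \o pa) (a2 \o pa)).
  { intros S h k E1 E2. rewrite <- !ca in E1, E2.
    assert (Ea' : pa \o h = pa \o k) by (apply (proj1 Ea); assumption).
    apply (pb_ext Hpb); [exact Ea'|].
    apply (proj1 Eb).
    - rewrite <- Hb1, <- !ca, (ca hb pb h), (ca hb pb k), <- Hc, <- !ca, Ea'; reflexivity.
    - rewrite <- Hb2, <- !ca, (ca hb pb h), (ca hb pb k), <- Hc, <- !ca, Ea'; reflexivity. }
  assert (Em : equivalence_rel (a1 \o pa) (a2 \o pa)) by exact (equiv_of_mem Ea Eb Hjm Hiff).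
  exists M, (a1 \o pa), (a2 \o pa). split.
  - split; [exact Em|split; [|split]].
    + exact (proj1 (proj1 (Hiff _ _ _) (mem2_gen _ _))).
    + exact (proj2 (proj1 (Hiff _ _ _) (mem2_gen _ _))).
    + intros T t1 t2 _ H1 H2. apply Hiff; split; assumption.
  - intros S x y H1 H2; apply Hiff; split; assumption.
Qed.

Lemma meet_mem (C : Category) : has_finite_limits C ->
  forall (X A B M S : C) (a1 a2 : Hom A X) (b1 b2 : Hom B X) (m1 m2 : Hom M X) (x y : Hom S X),
  equivalence_rel a1 a2 -> equivalence_rel b1 b2 -> is_eq_meet a1 a2 b1 b2 m1 m2 ->
  mem2 a1 a2 x y -> mem2 b1 b2 x y -> mem2 m1 m2 x y.
Proof.
  intros HF X A B M S a1 a2 b1 b2 m1 m2 x y Ea Eb Hm H1 H2.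
  destruct (meet_exists HF Ea Eb) as [M0 [n1 [n2 [[En [L1 [L2 _]]] Hn]]]].
  apply (mem2_le (proj2 (proj2 (proj2 Hm)) _ _ _ En L1 L2)). auto.
Qed.

Lemma join_exists (C : Category) : is_regular C -> is_maltsev C ->
  forall (X A B : C) (a1 a2 : Hom A X) (b1 b2 : Hom B X),
  equivalence_rel a1 a2 -> equivalence_rel b1 b2 ->
  exists J (j1 j2 : Hom J X), is_eq_join a1 a2 b1 b2 j1 j2 /\
    (forall S (x z : Hom S X), mem2 j1 j2 x z ->
       exists S' (e : Hom S' S) (y : Hom S' X), regular_epi e /\
         mem2 a1 a2 (x \o e) y /\ mem2 b1 b2 y (z \o e)).
Proof.
  intros HR HM X A B a1 a2 b1 b2 Ea Eb.
  pose proof HR as [HF _].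
  pose proof HF as [_ [Hprod _]].
  destruct (Hprod X X) as [Pp [p1 [p2 Hp]]].
  destruct (pb_exists HF a2 b1) as [P [pa [pb Hpb]]].
  pose proof (proj1 Hpb) as Hc.
  destruct (Hp P (a1 \o pa) (b2 \o pb)) as [f [F1 [F2 _]]].
  destruct (image_fact HR f) as [I [q [i [Hq [Hi Hmono]]]]].
  set (j1 := p1 \o i). set (j2 := p2 \o i).
  assert (Hin : forall S (x y z : Hom S X), mem2 a1 a2 x y -> mem2 b1 b2 y z -> mem2 j1 j2 x z).
  { intros S x y z [ga [G1 G2]] [gb [K1 K2]].
    destruct (proj2 Hpb S ga gb) as [h [E1 [E2 _]]]; [congruence|].
    exists (q \o h). unfold j1, j2. rewrite <- !ca, (ca i q h), Hi, !ca, F1, F2, <- !ca, E1, E2.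
    split; assumption. }
  assert (Hout : forall S (x z : Hom S X), mem2 j1 j2 x z ->
       exists S' (e : Hom S' S) (y : Hom S' X), regular_epi e /\
         mem2 a1 a2 (x \o e) y /\ mem2 b1 b2 y (z \o e)).
  { intros S x z [h [H1 H2]].
    destruct (cover HR h Hq) as [S' [e [w [He Hw]]]].
    exists S', e, (a2 \o (pa \o w)). split; [exact He|split].
    - exists (pa \o w). split; [|reflexivity].
      rewrite <- H1. unfold j1. rewrite <- !ca, <- Hw, (ca i q w), Hi, (ca p1 f w), F1, <- ca; reflexivity.
    - exists (pb \o w). split.
      + rewrite !ca, Hc; reflexivity.
      + rewrite <- H2. unfold j2. rewrite <- !ca, <- Hw, (ca i q w), Hi, (ca p2 f w), F2, <- ca; reflexivity. }
  assert (Hjm : jointly_monic2 j1 j2).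
  { intros S h k E1 E2. apply Hmono. unfold j1, j2 in *. apply (prod_ext Hp); rewrite !ca; [exact E1|exact E2]. }
  assert (Hrefl : reflexive_rel j1 j2).
  { apply (Hin X (idm X) (idm X) (idm X)); apply refl_mem; [exact (proj1 (proj2 Ea))|exact (proj1 (proj2 Eb))]. }
  assert (Ej : equivalence_rel j1 j2) by exact (proj2 HM X I j1 j2 Hjm Hrefl).
  exists I, j1, j2. split; [|exact Hout].
  split; [exact Ej|split; [|split]].
  - apply (Hin _ a1 a2 a2); [apply mem2_gen|apply refl_mem, (proj1 (proj2 Eb))].
  - apply (Hin _ b1 b1 b2); [apply refl_mem, (proj1 (proj2 Ea))|apply mem2_gen].
  - intros T t1 t2 Et La Lb.
    destruct (Hout _ _ _ (mem2_gen j1 j2)) as [S' [e [y [He [M1 M2]]]]].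
    destruct (proj2 (proj2 (proj2 Et)) _ _ _ _ (mem2_le La M1) (mem2_le Lb M2)) as [t [T1 T2]].
    exact (descent2 (proj1 Et) He T1 T2).
Qed.

Lemma join_cover (C : Category) : is_regular C -> is_maltsev C ->
  forall (X A B J S : C) (a1 a2 : Hom A X) (b1 b2 : Hom B X) (j1 j2 : Hom J X) (x z : Hom S X),
  equivalence_rel a1 a2 -> equivalence_rel b1 b2 -> is_eq_join a1 a2 b1 b2 j1 j2 ->
  mem2 j1 j2 x z ->
  exists S' (e : Hom S' S) (y : Hom S' X), regular_epi e /\
    mem2 a1 a2 (x \o e) y /\ mem2 b1 b2 y (z \o e).
Proof.
  intros HR HM X A B J S a1 a2 b1 b2 j1 j2 x z Ea Eb Hj H.
  destruct (join_exists HR HM Ea Eb) as [J0 [k1 [k2 [[Ek [L1 [L2 _]]] Hk]]]].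
  apply Hk. exact (mem2_le (proj2 (proj2 (proj2 Hj)) _ _ _ Ek L1 L2) H).
Qed.

Lemma join_in (C : Category) (X A B J S : C) (a1 a2 : Hom A X) (b1 b2 : Hom B X)
  (j1 j2 : Hom J X) (x y z : Hom S X) :
  is_eq_join a1 a2 b1 b2 j1 j2 -> mem2 a1 a2 x y -> mem2 b1 b2 y z -> mem2 j1 j2 x z.
Proof.
  intros [Ej [La [Lb _]]] H1 H2.
  exact (proj2 (proj2 (proj2 Ej)) _ _ _ _ (mem2_le La H1) (mem2_le Lb H2)).
Qed.

Lemma kernel_pair (C : Category) : has_finite_limits C ->
  forall (R Y : C) (r : Hom R Y), exists K (k1 k2 : Hom K R), equivalence_rel k1 k2 /\
    (forall S (u v : Hom S R), mem2 k1 k2 u v <-> r \o u = r \o v).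
Proof.
  intros HF R Y r.
  destruct (pb_exists HF r r) as [K [k1 [k2 Hpb]]].
  assert (Hm : forall S (u v : Hom S R), mem2 k1 k2 u v <-> r \o u = r \o v).
  { intros S u v; split.
    - intros [h [H1 H2]]. rewrite <- H1, <- H2, !ca, (proj1 Hpb); reflexivity.
    - intros E. destruct (proj2 Hpb S u v E) as [h [H1 [H2 _]]]. exists h; split; assumption. }
  exists K, k1, k2. split; [|exact Hm].
  split; [|split; [|split]].
  - intros S h k E1 E2. exact (pb_ext Hpb E1 E2).
  - apply Hm; reflexivity.
  - intros S x y H. apply Hm in H. apply Hm. symmetry; exact H.
  - intros S x y z H1 H2. apply Hm in H1. apply Hm in H2. apply Hm. congruence.
Qed.

Lemma cd_majority (C : Category) : is_regular C -> is_maltsev C ->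
  congruence_distributive C -> is_majority C.
Proof.
  intros HR HM HCD R X Y Z r1 r2 r3 Hjm S x x' y y' z z'
    [hu [U1 [U2 U3]]] [hv [V1 [V2 V3]]] [hw [W1 [W2 W3]]].
  pose proof HR as [HF _].
  destruct (kernel_pair HF r1) as [K1 [e11 [e12 [E1 M1]]]].
  destruct (kernel_pair HF r2) as [K2 [e21 [e22 [E2 M2]]]].
  destruct (kernel_pair HF r3) as [K3 [e31 [e32 [E3 M3]]]].
  destruct (join_exists HR HM E2 E3) as [Jbc [bc1 [bc2 [Hbc _]]]].
  destruct (meet_exists HF E1 (proj1 Hbc)) as [L [l1 [l2 [Hl Hlmem]]]].
  destruct (meet_exists HF E1 E2) as [AB [ab1 [ab2 [Hab _]]]].
  destruct (meet_exists HF E1 E3) as [AC [ac1 [ac2 [Hac _]]]].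
  destruct (join_exists HR HM (proj1 Hab) (proj1 Hac)) as [Rr [rr1 [rr2 [Hrr _]]]].
  destruct (proj2 (HCD R) _ _ _ _ _ _ _ _ _ _ _ _ _ _ _ _ _ _ _ _ _ _ _ _
              E1 E2 E3 Hbc Hl Hab Hac Hrr) as [Hle _].
  assert (Hluv : mem2 l1 l2 hu hv).
  { apply Hlmem.
    - apply M1. congruence.
    - apply (join_in Hbc (y := hw)); [apply M2|apply M3]; congruence. }
  destruct (join_cover HR HM (proj1 Hab) (proj1 Hac) Hrr (mem2_le Hle Hluv))
    as [S' [e [t [He [Ht1 Ht2]]]]].
  pose proof (mem2_le (proj1 (proj2 Hab)) Ht1) as T1. apply M1 in T1.
  pose proof (mem2_le (proj1 (proj2 (proj2 Hab))) Ht1) as T2. apply M2 in T2.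
  pose proof (mem2_le (proj1 (proj2 (proj2 Hac))) Ht2) as T3. apply M3 in T3.
  apply (descent3 Hjm He (t := t)).
  - rewrite <- T1, ca, U1; reflexivity.
  - rewrite <- T2, ca, U2; reflexivity.
  - rewrite T3, ca, V3; reflexivity.
Qed.

Lemma triple_rel (C : Category) : is_regular C ->
  forall (X A B D : C) (a1 a2 : Hom A X) (b1 b2 : Hom B X) (c1 c2 : Hom D X),
  exists R (r1 r2 r3 : Hom R X), jointly_monic3 r1 r2 r3 /\
  (forall S (w p q s : Hom S X), mem2 b1 b2 w p -> mem2 a1 a2 w q -> mem2 c1 c2 w s ->
     mem3 r1 r2 r3 p q s) /\
  (forall S (p q s : Hom S X), mem3 r1 r2 r3 p q s ->
     exists S' (e : Hom S' S) (w : Hom S' X), regular_epi e /\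
       mem2 b1 b2 w (p \o e) /\ mem2 a1 a2 w (q \o e) /\ mem2 c1 c2 w (s \o e)).
Proof.
  intros HR X A B D a1 a2 b1 b2 c1 c2.
  pose proof HR as [HF _]. pose proof HF as [_ [Hprod _]].
  destruct (pb_exists HF b1 a1) as [P1 [pb [pa Hp1]]].
  destruct (pb_exists HF (b1 \o pb) c1) as [W [w1 [wc Hw]]].
  destruct (Hprod X X) as [Q2 [s1 [s2 HQ2]]].
  destruct (Hprod X Q2) as [Q3 [t1 [t2 HQ3]]].
  destruct (HQ2 W (a2 \o (pa \o w1)) (c2 \o wc)) as [G [G1 [G2 _]]].
  destruct (HQ3 W (b2 \o (pb \o w1)) G) as [F [F1 [F2 _]]].
  destruct (image_fact HR F) as [I [q [i [Hq [Hi Hmono]]]]].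
  pose proof (proj1 Hp1) as C1. pose proof (proj1 Hw) as C2.
  exists I, (t1 \o i), (s1 \o (t2 \o i)), (s2 \o (t2 \o i)). split; [|split].
  - intros S u v E1 E2 E3. apply Hmono.
    apply (prod_ext HQ3); [rewrite !ca; exact E1|].
    rewrite !ca in E2; rewrite !ca in E3. apply (prod_ext HQ2); rewrite !ca; [exact E2|exact E3].
  - intros S w p0 q0 s0 [gb [B1 B2]] [ga [A1 A2]] [gc [D1 D2]].
    destruct (proj2 Hp1 S gb ga) as [h1 [H11 [H12 _]]]; [congruence|].
    destruct (proj2 Hw S h1 gc) as [h [H1 [H2 _]]]; [rewrite <- ca, H11; congruence|].
    exists (q \o h).
    assert (Fh : i \o (q \o h) = F \o h) by (rewrite ca, Hi; reflexivity).
    split; [|split]; rewrite <- !ca, Fh.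
    + rewrite ca, F1, <- !ca, H1, H11; exact B2.
    + rewrite (ca t2 F h), F2, ca, G1, <- !ca, H1, H12; exact A2.
    + rewrite (ca t2 F h), F2, ca, G2, <- !ca, H2; exact D2.
  - intros S p0 q0 s0 [k [K1 [K2 K3]]].
    destruct (cover HR k Hq) as [S' [e [w0 [He Hw0]]]].
    assert (Fw : F \o w0 = i \o (k \o e)) by (rewrite <- Hw0, <- Hi, ca; reflexivity).
    exists S', e, (b1 \o (pb \o (w1 \o w0))). split; [exact He|split; [|split]].
    + exists (pb \o (w1 \o w0)). split; [reflexivity|].
      rewrite <- K1, <- !ca, <- Fw, (ca t1 F w0), F1, <- !ca; reflexivity.
    + exists (pa \o (w1 \o w0)). split.
      * rewrite (ca a1 pa), <- C1, <- ca; reflexivity.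
      * rewrite <- K2, <- !ca, <- Fw, (ca t2 F w0), F2, (ca s1 G w0), G1, <- !ca; reflexivity.
    + exists (wc \o w0). split.
      * rewrite (ca c1 wc), <- C2, <- !ca; reflexivity.
      * rewrite <- K3, <- !ca, <- Fw, (ca t2 F w0), F2, (ca s2 G w0), G2, <- !ca; reflexivity.
Qed.

Lemma key (C : Category) : is_regular C -> is_majority C ->
  forall (X A B D Rr : C) (a1 a2 : Hom A X) (b1 b2 : Hom B X) (c1 c2 : Hom D X)
    (rr1 rr2 : Hom Rr X),
  equivalence_rel a1 a2 -> equivalence_rel b1 b2 -> equivalence_rel c1 c2 ->
  equivalence_rel rr1 rr2 ->
  (forall S (u v : Hom S X), mem2 a1 a2 u v -> mem2 b1 b2 u v -> mem2 rr1 rr2 u v) ->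
  (forall S (u v : Hom S X), mem2 a1 a2 u v -> mem2 c1 c2 u v -> mem2 rr1 rr2 u v) ->
  forall S (x y z : Hom S X), mem2 a1 a2 x z -> mem2 b1 b2 x y -> mem2 c1 c2 y z ->
  mem2 rr1 rr2 x z.
Proof.
  intros HR HMaj X A B D Rr a1 a2 b1 b2 c1 c2 rr1 rr2
    [_ [Ra [Sa Ta]]] [_ [Rb [Sb Tb]]] [_ [Rc [Sc Tc]]] Err Hab Hac S x y z Hxz Hxy Hyz.
  destruct (triple_rel HR a1 a2 b1 b2 c1 c2) as [R [r1 [r2 [r3 [Hjm [Hin Hout]]]]]].
  assert (H : mem3 r1 r2 r3 x x z).
  { apply (HMaj R X X X r1 r2 r3 Hjm S x z x y z x).
    - apply (Hin S x); apply refl_mem; assumption.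
    - apply (Hin S y); [apply Sb; exact Hxy|apply refl_mem; exact Ra|exact Hyz].
    - apply (Hin S z); [apply refl_mem; exact Rb|apply Sa; exact Hxz|apply refl_mem; exact Rc]. }
  destruct (Hout _ _ _ _ H) as [S' [e [w [He [Mb [Ma Mc]]]]]].
  assert (H1 : mem2 rr1 rr2 (x \o e) w) by (apply Hab; [apply Sa|apply Sb]; assumption).
  assert (H2 : mem2 rr1 rr2 w (z \o e)).
  { apply Hac; [|exact Mc]. apply (Ta _ _ (x \o e)); [exact Ma|apply mem2_comp; exact Hxz]. }
  destruct (proj2 (proj2 (proj2 Err)) _ _ _ _ H1 H2) as [t [T1 T2]].
  exact (descent2 (proj1 Err) He T1 T2).
Qed.

Lemma majority_cd (C : Category) : is_regular C -> is_maltsev C ->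
  is_majority C -> congruence_distributive C.
Proof.
  intros HR HM HMaj X. pose proof HR as [HF _]. split.
  - intros A B a1 a2 b1 b2 Ea Eb. split.
    + destruct (meet_exists HF Ea Eb) as [M [m1 [m2 [Hm _]]]]. exists M, m1, m2; exact Hm.
    + destruct (join_exists HR HM Ea Eb) as [J [j1 [j2 [Hj _]]]]. exists J, j1, j2; exact Hj.
  - intros A B D a1 a2 b1 b2 c1 c2 BC bc1 bc2 L l1 l2 AB ab1 ab2 AC ac1 ac2 Rr rr1 rr2
      Ea Eb Ec Hbc Hl Hab Hac Hrr. split.
    + change (mem2 rr1 rr2 l1 l2).
      pose proof (mem2_le (proj1 (proj2 Hl)) (mem2_gen l1 l2)) as Hla.
      pose proof (mem2_le (proj1 (proj2 (proj2 Hl))) (mem2_gen l1 l2)) as Hlbc.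
      destruct (join_cover HR HM Eb Ec Hbc Hlbc) as [S' [e [y [He [M1 M2]]]]].
      assert (K : mem2 rr1 rr2 (l1 \o e) (l2 \o e)).
      { apply (key HR HMaj Ea Eb Ec (proj1 Hrr)) with (y := y); [| |apply mem2_comp; exact Hla|exact M1|exact M2].
        - intros S u v H1 H2. exact (mem2_le (proj1 (proj2 Hrr)) (meet_mem HF Ea Eb Hab H1 H2)).
        - intros S u v H1 H2. exact (mem2_le (proj1 (proj2 (proj2 Hrr))) (meet_mem HF Ea Ec Hac H1 H2)). }
      destruct K as [t [T1 T2]].
      exact (descent2 (proj1 (proj1 Hrr)) He T1 T2).
    + apply (proj2 (proj2 (proj2 Hrr)) L l1 l2 (proj1 Hl)).
      * apply (proj2 (proj2 (proj2 Hl)) AB ab1 ab2 (proj1 Hab) (proj1 (proj2 Hab))).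
        exact (le_trans (proj1 (proj2 (proj2 Hab))) (proj1 (proj2 Hbc))).
      * apply (proj2 (proj2 (proj2 Hl)) AC ac1 ac2 (proj1 Hac) (proj1 (proj2 Hac))).
        exact (le_trans (proj1 (proj2 (proj2 Hac))) (proj1 (proj2 (proj2 Hbc)))).
Qed.

Theorem corollary3p6 (C : Category) :
  is_regular C -> is_maltsev C ->
  (congruence_distributive C <-> is_majority C).
Proof.
  intros HR HM. split; [exact (cd_majority HR HM)|exact (majority_cd HR HM)].
Qed.
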